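(* Let $\mathcal G=(\mathcal V,\mathcal E,W)$ be a network, $h\in\mathbb{R}^{\mathcal V}$, and consider the SNC game with binary actions on $\mathcal G$ with external field $h$. Let $\mathcal V=\mathcal R\cup\mathcal S$, $\mathcal R\cap\mathcal S=\emptyset$, be a binary partition such that $\mathcal G_{\mathcal R}$ is structurally balanced and $\mathcal G_{\mathcal S}$ is undirected, and let $\tau\in\{\pm1\}^{\mathcal R}$ be such that $\mathcal G_{\mathcal R}^{[\tau]}$ is unsigned. Let $h^-,h^+\in\mathbb{R}^{\mathcal R}$ be given by $h_i^+=\tau_ih_i+w_i^{\mathcal S}$ and $h_i^-=\tau_ih_i-w_i^{\mathcal S}$ for $i\in\mathcal R$. If $\mathcal G_{\mathcal R}$ is $(h^-,h^+)$-indecomposable and $w_i^{\mathcal R}-|h_i|>w_i^{\mathcal S}$ for all $i\in\mathcal R$, then there exists a globally BR-stable subset of the set of Nash equilibria of the game.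
   Context: A network is a triple $\mathcal G=(\mathcal V,\mathcal E,W)$ where $\mathcal V$ is a finite nonempty set, $\mathcal E\subseteq\mathcal V\times\mathcal V$, and $W\in\mathbb{R}^{\mathcal V\times\mathcal V}$ has zero diagonal and satisfies $W_{ij}\neq0$ iff $(i,j)\in\mathcal E$ (weights may have either sign). It is unsigned if $W\ge0$ entrywise and undirected if its weight matrix is symmetric. For $\mathcal U\subseteq\mathcal V$, the subnetwork $\mathcal G_{\mathcal U}$ has node set $\mathcal U$, links $\mathcal E\cap(\mathcal U\times\mathcal U)$ and weight matrix $W_{\mathcal U\mathcal U}$. A network is structurally balanced if its node set can be written as a disjoint union of two sets with nonnegative weights on links within each set and nonpositive weights on links between the two sets. For $\tau\in\{\pm1\}^{\mathcal R}$, $\mathcal G_{\mathcal R}^{[\tau]}$ is the network with the same nodes and links as $\mathcal G_{\mathcal R}$ and weight matrix $[\tau]W_{\mathcal R\mathcal R}[\tau]$, where $[\tau]$ is the diagonal matrix with diagonal $\tau$. For $i\in\mathcal V$ and $\mathcal B\subseteq\mathcal V$, $w_i^{\mathcal B}=\sum_{j\in\mathcal B}|W_{ij}|$. Indecomposability: a network with node set $\mathcal U$ and $h^-\le h^+$ in $\mathbb{R}^{\mathcal U}$ is $(h^-,h^+)$-indecomposable if for every partition $\mathcal U=\mathcal U^-\cup\mathcal U^+$ into two disjoint nonempty sets there is a node $i$ with either $i\in\mathcal U^+$ and $w_i^{\mathcal U^+}+h_i^+<w_i^{\mathcal U^-}$, or $i\in\mathcal U^-$ and $w_i^{\mathcal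 U^-}-h_i^-<w_i^{\mathcal U^+}$. The SNC game with binary actions on $\mathcal G$ with external field $h\in\mathbb{R}^{\mathcal V}$ has player set $\mathcal V$, action set $\{-1,+1\}$ for each player, strategy profiles $\mathcal X=\{\pm1\}^{\mathcal V}$, and utilities $u_i(x)=h_ix_i+x_i\sum_{j\in\mathcal V}W_{ij}x_j$. Best responses $\mathcal B_i(x_{-i})=\arg\max_{x_i\in\{\pm1\}}u_i(x_i,x_{-i})$; Nash equilibrium: $x^*_i\in\mathcal B_i(x^*_{-i})$ for all $i$. A BR-path of length $l\ge0$ from $x$ to $y$ is a sequence $x^{(0)}=x,\dots,x^{(l)}=y$ such that for each $k$ some player $i_k$ has $x^{(k)}_{-i_k}=x^{(k-1)}_{-i_k}$ and $x^{(k)}_{i_k}\in\mathcal B_{i_k}(x^{(k-1)}_{-i_k})\setminus\{x^{(k-1)}_{i_k}\}$. A set $\mathcal X^*\subseteq\mathcal X$ is globally BR-reachable if from every profile there is a BR-path to some element of $\mathcal X^*$; BR-invariant if there is no BR-path from an element of $\mathcal X^*$ to an element outside; globally BR-stable if both. *)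

(* Defs.v *)
From mathcomp Require Import all_boot all_order all_algebra.
Set Implicit Arguments. Unset Strict Implicit. Unset Printing Implicit Defensive.
Import Order.TTheory GRing.Theory Num.Theory.
Local Open Scope ring_scope.

Section Defs.
Variables (R : realFieldType) (V : finType).

Definition wB (W : V -> V -> R) (i : V) (B : {set V}) : R :=
  \sum_(j in B) `|W i j|.

Definition structurally_balanced (W : V -> V -> R) (U : {set V}) : Prop :=
  exists A : {set V}, A \subset U /\
    forall i j, i \in U -> j \in U ->
      (((i \in A) == (j \in A)) -> 0 <= W i j) /\
      (((i \in A) != (j \in A)) -> W i j <= 0).

Definition undirected_on (W : V -> V -> R) (U : {set V}) : Prop :=
  forall i j, i \in U -> j \in U -> W i j = W j i.

Definition sign_vector (tau : V -> R) (U : {set V}) : Prop :=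
  forall i, i \in U -> tau i = 1 \/ tau i = -1.

Definition unsigned_gauge (W : V -> V -> R) (U : {set V}) (tau : V -> R) : Prop :=
  forall i j, i \in U -> j \in U -> 0 <= tau i * W i j * tau j.

Definition indecomposable (W : V -> V -> R) (U : {set V}) (hm hp : V -> R) : Prop :=
  (forall i, i \in U -> hm i <= hp i) /\
  forall Up : {set V}, Up \subset U -> Up != set0 -> U :\: Up != set0 ->
    exists i,
      (i \in Up /\ wB W i Up + hp i < wB W i (U :\: Up)) \/
      (i \in U :\: Up /\ wB W i (U :\: Up) - hm i < wB W i Up).

(* profiles: true = +1, false = -1 *)
Definition spin (b : bool) : R := if b then 1 else -1.

Definition profile := {ffun V -> bool}.

Definition upd (x : profile) (i : V) (a : bool) : profile :=
  [ffun j => if j == i then a else x j].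

Definition utility (W : V -> V -> R) (h : V -> R) (i : V) (x : profile) : R :=
  h i * spin (x i) + spin (x i) * \sum_(j : V) W i j * spin (x j).

Definition best_resp W h (x : profile) (i : V) (a : bool) : Prop :=
  forall b : bool, utility W h i (upd x i b) <= utility W h i (upd x i a).

Definition nash W h (x : profile) : Prop := forall i, best_resp W h x i (x i).

Definition br_step W h (x y : profile) : Prop :=
  exists i, (forall j, j != i -> y j = x j) /\ best_resp W h x i (y i) /\ y i != x i.

Inductive br_path W h : profile -> profile -> Prop :=
  | br_refl x : br_path W h x x
  | br_cons x y z : br_step W h x y -> br_path W h y z -> br_path W h x z.

Definition globally_BR_reachable W h (Xs : {set profile}) : Prop :=
  forall x, exists2 y, y \in Xs & br_path W h x y.

Definition BR_invariant W h (Xs : {set profile}) : Prop :=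
  forall x y, x \in Xs -> br_path W h x y -> y \in Xs.

Definition globally_BR_stable W h (Xs : {set profile}) : Prop :=
  globally_BR_reachable W h Xs /\ BR_invariant W h Xs.

End Defs.

(* Main.v *)
Require Import Defs.
From mathcomp Require Import all_boot all_order all_algebra.
From mathcomp Require Import lra ring.
From Stdlib Require Import ClassicalEpsilon Classical.
Import Order.TTheory GRing.Theory Num.Theory.
Local Open Scope ring_scope.
Set Implicit Arguments. Unset Strict Implicit.

Definition Fi (R : realFieldType) (V : finType) (W : V -> V -> R) (h : V -> R)
  (x : profile V) (i : V) : R := h i + \sum_j W i j * spin R (x j).
Arguments Fi {R V}.

Lemma spinN (R : realFieldType) b : spin R (~~ b) = - spin R b.
Proof. by case: b => /=; rewrite ?opprK. Qed.

Lemma spin_sq (R : realFieldType) b : spin R b * spin R b = 1.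
Proof. by case: b => /=; rewrite ?mulrNN mulr1. Qed.

Lemma spin_upd (R : realFieldType) (V : finType) (x : profile V) i b j :
  spin R (upd x i b j) = if j == i then spin R b else spin R (x j).
Proof. by rewrite /upd ffunE; case: eqP. Qed.

Lemma util_upd (R : realFieldType) (V : finType) (W : V -> V -> R) h (x : profile V) i b :
  W i i = 0 -> utility W h i (upd x i b) = spin R b * Fi W h x i.
Proof.
move=> Wii; rewrite /utility /Fi spin_upd eqxx mulrDr mulrC; congr (_ + _).
congr (_ * _); apply: eq_bigr => j _; rewrite spin_upd; case: eqP => // ->.
by rewrite Wii !mul0r.
Qed.

Lemma br_path_trans (R : realFieldType) (V : finType) (W : V -> V -> R) h (x y z : profile V) :
  br_path W h x y -> br_path W h y z -> br_path W h x z.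
Proof.
elim=> // a b c st _ IH /IH; exact: br_cons.
Qed.

Lemma step_flip (R : realFieldType) (V : finType) (W : V -> V -> R) h (x : profile V) i :
  W i i = 0 -> spin R (x i) * Fi W h x i <= 0 -> br_step W h x (upd x i (~~ x i)).
Proof.
move=> Wii le0; exists i; split; last split.
- by move=> j /negPf ji; rewrite /upd ffunE ji.
- move=> b; rewrite !util_upd // /upd ffunE eqxx.
  by case: b; case: (x i) le0 => /=; lra.
- by rewrite /upd ffunE eqxx; case: (x i).
Qed.

Lemma step_inv (R : realFieldType) (V : finType) (W : V -> V -> R) h (x y : profile V) :
  (forall i, W i i = 0) -> br_step W h x y ->
  exists i, y = upd x i (~~ x i) /\ spin R (x i) * Fi W h x i <= 0.
Proof.
move=> Wd [i [oth [br ne]]].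
have yi : y i = ~~ x i by move: ne; case: (y i); case: (x i).
have ey : y = upd x i (~~ x i).
  by apply/ffunP => j; rewrite /upd ffunE; case: eqP => [->|/eqP/oth] //.
exists i; split => //.
have := br (x i); rewrite !util_upd // yi spinN; lra.
Qed.

Lemma not_nash (R : realFieldType) (V : finType) (W : V -> V -> R) h (x : profile V) :
  (forall i, W i i = 0) -> ~ nash W h x -> exists i, spin R (x i) * Fi W h x i < 0.
Proof.
move=> Wd nn; have [i ni] := not_all_ex_not _ _ nn; exists i.
have [b nb] := not_all_ex_not _ _ ni.
move: nb; rewrite !util_upd // => /negP; rewrite -ltNge.
by case: b; case: (x i) => /=; lra.
Qed.
Lemma sum_upd (R : realFieldType) (V : finType) (P : pred V) (f f' : V -> R) i :
  P i -> (forall k, k != i -> f' k = f k) ->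
  \sum_(k | P k) f' k = \sum_(k | P k) f k + (f' i - f i).
Proof.
move=> Pi e; rewrite (bigD1 i) //= [in RHS](bigD1 i) //=.
rewrite (eq_bigr f); last by move=> k /andP [_ /e].
lra.
Qed.

Lemma sum_upd_in (R : realFieldType) (V : finType) (A : {set V}) (f f' : V -> R) i :
  i \in A -> (forall k, k != i -> f' k = f k) ->
  \sum_(k in A) f' k = \sum_(k in A) f k + (f' i - f i).
Proof. exact: sum_upd. Qed.

Lemma sum_upd_all (R : realFieldType) (V : finType) (f f' : V -> R) i :
  (forall k, k != i -> f' k = f k) ->
  \sum_k f' k = \sum_k f k + (f' i - f i).
Proof. exact: sum_upd. Qed.

Lemma sum_split (R : realFieldType) (V : finType) (A : {set V}) (f : V -> R) :
  \sum_k f k = \sum_(k in A) f k + \sum_(k in ~: A) f k.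
Proof.
rewrite (bigID (mem A)) /=; congr (_ + _); apply: eq_bigl => k; by rewrite in_setC.
Qed.

Definition Phi (R : realFieldType) (V : finType) (W : V -> V -> R) (h : V -> R)
  (Rn : {set V}) (x : profile V) : R :=
  \sum_(k in ~: Rn) spin R (x k) * (2 * (h k + \sum_(j in Rn) W k j * spin R (x j))
     + \sum_(j in ~: Rn) W k j * spin R (x j)).
Arguments Phi {R V}.

Lemma Phi_flip (R : realFieldType) (V : finType) (W : V -> V -> R) h Rn
   (x : profile V) i b :
  (forall i, W i i = 0) -> undirected_on W (~: Rn) -> i \in ~: Rn ->
  Phi W h Rn (upd x i b) = Phi W h Rn x + 2 * (spin R b - spin R (x i)) * Fi W h x i.
Proof.
move=> Wd sym iS.
set s := fun j => spin R (x j).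
have ss : forall j, spin R (upd x i b j) = if j == i then spin R b else s j.
  by move=> j; rewrite spin_upd.
have oth : forall j, j != i -> spin R (upd x i b j) = s j.
  by move=> j /negPf ji; rewrite ss ji.
have si : spin R (upd x i b i) = spin R b by rewrite ss eqxx.
have bR : forall k, \sum_(j in Rn) W k j * spin R (upd x i b j) = \sum_(j in Rn) W k j * s j.
  move=> k; apply: eq_bigr => j jR; rewrite oth //.
  by apply/eqP => ji; move: iS; rewrite -ji in_setC jR.
have TS : forall k, \sum_(j in ~: Rn) W k j * spin R (upd x i b j) =
     \sum_(j in ~: Rn) W k j * s j + W k i * (spin R b - s i).
  move=> k; rewrite (@sum_upd_in _ _ _ (fun j => W k j * s j) _ i) //; last first.
    by move=> j /oth ->.
  by rewrite si; congr (_ + _); rewrite mulrBr.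
rewrite /Phi.
under eq_bigr => k _ do rewrite bR TS addrA mulrDr.
rewrite big_split /=.
rewrite (@sum_upd_in _ _ _ (fun k => s k * (2 * (h k + \sum_(j in Rn) W k j * s j) + \sum_(j in ~: Rn) W k j * s j)) _ i) //; last first.
  by move=> k /oth; rewrite /s => ->.
rewrite (@sum_upd_in _ _ _ (fun k => s k * (W k i * (spin R b - s i))) (fun k => spin R (upd x i b k) * (W k i * (spin R b - s i))) i) //; last first.
  by move=> k /oth; rewrite /s => ->.
rewrite si Wd mul0r mulr0 ?subr0.
have sy : \sum_(k in ~: Rn) s k * (W k i * (spin R b - s i)) =
   (\sum_(j in ~: Rn) W i j * s j) * (spin R b - s i).
  rewrite mulr_suml; apply: eq_bigr => k kS; rewrite (sym i k) //; lra.
rewrite sy /Fi (@sum_split _ _ Rn).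
rewrite /s; set A := \sum_(j in Rn) _; set B := \sum_(j in ~: Rn) _.
lra.
Qed.

Definition Upset (R : realFieldType) (V : finType) (Rn : {set V}) (tau : V -> R)
  (x : profile V) : {set V} := [set j in Rn | tau j * spin R (x j) == 1].
Arguments Upset {R V}.

Lemma tau_abs (R : realFieldType) (V : finType) (Rn : {set V}) (tau : V -> R) j :
  sign_vector tau Rn -> j \in Rn -> `|tau j| = 1.
Proof. by move=> sv /sv [] ->; rewrite ?normrN normr1. Qed.

Lemma gauge_abs (R : realFieldType) (V : finType) (W : V -> V -> R) (Rn : {set V}) tau i j :
  sign_vector tau Rn -> unsigned_gauge W Rn tau -> i \in Rn -> j \in Rn ->
  tau i * W i j * tau j = `|W i j|.
Proof.
move=> sv ug iR jR; rewrite -(ger0_norm (ug _ _ iR jR)) !normrM.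
by rewrite (tau_abs sv iR) (tau_abs sv jR) mul1r mulr1.
Qed.

Lemma yval (R : realFieldType) (V : finType) (Rn : {set V}) (tau : V -> R) (x : profile V) j :
  sign_vector tau Rn -> j \in Rn ->
  (j \in Upset Rn tau x -> spin R (x j) = tau j) /\
  (j \notin Upset Rn tau x -> spin R (x j) = - tau j).
Proof.
move=> sv jR; rewrite /Upset inE jR /=.
by case: (sv j jR) => ->; case: (x j) => /=; split => /eqP; lra.
Qed.

Lemma G_bounds (R : realFieldType) (V : finType) (W : V -> V -> R) h (Rn : {set V}) tau
   (x : profile V) i :
  sign_vector tau Rn -> unsigned_gauge W Rn tau -> i \in Rn ->
  let U := Upset Rn tau x in
  tau i * h i + wB W i U - wB W i (Rn :\: U) - wB W i (~: Rn) <= tau i * Fi W h x i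
  /\ tau i * Fi W h x i <= tau i * h i + wB W i U - wB W i (Rn :\: U) + wB W i (~: Rn).
Proof.
move=> sv ug iR U.
have sUR : U \subset Rn by apply/subsetP => j; rewrite inE => /andP [].
rewrite /Fi mulrDr (@sum_split _ _ Rn) mulrDr !mulr_sumr (big_setID U) /=.
rewrite (setIidPr sUR).
have e1 : \sum_(j in U) tau i * (W i j * spin R (x j)) = wB W i U.
  apply: eq_bigr => j jU; have jR := subsetP sUR j jU.
  by rewrite (proj1 (yval x sv jR) jU) mulrA (gauge_abs sv ug iR jR).
have e2 : \sum_(j in Rn :\: U) tau i * (W i j * spin R (x j)) = - wB W i (Rn :\: U).
  rewrite /wB -sumrN; apply: eq_bigr => j; rewrite inE => /andP [jU jR].
  by rewrite (proj2 (yval x sv jR) jU) !mulrN mulrA (gauge_abs sv ug iR jR).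
have e3 : `|\sum_(j in ~: Rn) tau i * (W i j * spin R (x j))| <= wB W i (~: Rn).
  apply: le_trans (ler_norm_sum _ _ _) _; rewrite /wB le_eqVlt; apply/orP; left.
  apply/eqP; apply: eq_bigr => j _; rewrite !normrM (tau_abs sv iR) mul1r.
  by case: (x j); rewrite /= ?normrN normr1 mulr1.
move: e3; rewrite ler_norml => /andP [e3 e4].
rewrite e1 e2; lra.
Qed.

Lemma card_lt (T : finType) (A A' : {set T}) i :
  (forall j, j \in A' -> j \in A) -> i \in A -> i \notin A' -> (#|A'| < #|A|)%N.
Proof.
move=> sub iA iA'; apply: proper_card; apply/properP; split.
  by apply/subsetP => j /sub.
by exists i.
Qed.

Lemma tau_sq (R : realFieldType) (V : finType) (Rn : {set V}) (tau : V -> R) j :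
  sign_vector tau Rn -> j \in Rn -> tau j * tau j = 1.
Proof. by move=> sv /sv [] ->; rewrite ?mulrNN mulr1. Qed.

Lemma yvals (R : realFieldType) (V : finType) (Rn : {set V}) (tau : V -> R) (x : profile V) j :
  sign_vector tau Rn -> j \in Rn ->
  tau j * spin R (x j) = 1 \/ tau j * spin R (x j) = -1.
Proof.
move=> sv jR; case: (sv j jR) => ->; case: (x j) => /=; [left|right|right|left]; lra.
Qed.

Lemma sF_gauge (R : realFieldType) (V : finType) (W : V -> V -> R) h (Rn : {set V}) tau
   (x : profile V) i :
  sign_vector tau Rn -> i \in Rn ->
  spin R (x i) * Fi W h x i = (tau i * spin R (x i)) * (tau i * Fi W h x i).
Proof.
by move=> sv iR; rewrite -[LHS]mul1r -(tau_sq sv iR); ring.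
Qed.

Lemma F_flip (R : realFieldType) (V : finType) (W : V -> V -> R) h (x : profile V) k b i :
  Fi W h (upd x k b) i = Fi W h x i + W i k * (spin R b - spin R (x k)).
Proof.
rewrite /Fi (@sum_upd_all _ _ (fun j => W i j * spin R (x j)) _ k); last first.
  by move=> j /negPf jk; rewrite spin_upd jk.
by rewrite spin_upd eqxx -mulrBr addrA.
Qed.

Lemma mono_flip (R : realFieldType) (V : finType) (W : V -> V -> R) h (Rn : {set V}) tau
   (x : profile V) k i :
  sign_vector tau Rn -> unsigned_gauge W Rn tau -> k \in Rn -> i \in Rn ->
  tau i * Fi W h (upd x k (~~ x k)) i =
  tau i * Fi W h x i - 2 * (tau k * spin R (x k)) * (tau i * W i k * tau k).
Proof.
move=> sv ug kR iR; rewrite F_flip spinN.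
have tt := tau_sq sv kR.
have -> : 2 * (tau k * spin R (x k)) * (tau i * W i k * tau k) =
  2 * (tau k * tau k) * (spin R (x k) * tau i * W i k) by ring.
rewrite tt; ring.
Qed.

Definition Pdown (R : realFieldType) (V : finType) (W : V -> V -> R) h (Rn : {set V}) tau
  (x : profile V) : Prop :=
  forall i, i \in Rn -> tau i * spin R (x i) = 1 -> 0 <= tau i * Fi W h x i.
Definition Pup (R : realFieldType) (V : finType) (W : V -> V -> R) h (Rn : {set V}) tau
  (x : profile V) : Prop :=
  forall i, i \in Rn -> tau i * spin R (x i) = -1 -> tau i * Fi W h x i <= 0.

Lemma flip_y (R : realFieldType) (V : finType) (tau : V -> R) (x : profile V) i :
  tau i * spin R (upd x i (~~ x i) i) = - (tau i * spin R (x i)).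
Proof. by rewrite spin_upd eqxx spinN mulrN. Qed.

Lemma phase_down (R : realFieldType) (V : finType) (W : V -> V -> R) h (Rn : {set V}) tau :
  (forall i, W i i = 0) -> sign_vector tau Rn ->
  forall n (x : profile V), (#|Upset Rn tau x| < n)%N ->
  exists2 x', br_path W h x x' & Pdown W h Rn tau x'.
Proof.
move=> Wd sv; elim=> [//|n IH] x cx.
case: (classic (Pdown W h Rn tau x)) => [P|].
  by exists x => //; exact: br_refl.
move=> nP; have [i ni] := not_all_ex_not _ _ nP.
have [iR ni'] := imply_to_and _ _ ni.
have [yi /negP] := imply_to_and _ _ ni'.
rewrite -ltNge => Gi.
set x' := upd x i (~~ x i).
have st : br_step W h x x'.
  apply: step_flip => //; rewrite (sF_gauge W h x sv iR) yi mul1r; exact: ltW.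
have cx' : (#|Upset Rn tau x'| < n)%N.
  suff lt : (#|Upset Rn tau x'| < #|Upset Rn tau x|)%N by apply: leq_trans lt _; rewrite -ltnS.
  apply: (@card_lt _ _ _ i).
  - move=> j; rewrite !inE => /andP [jR]; case: (eqVneq j i) => [->|ji].
      by rewrite flip_y yi => /eqP; lra.
    by rewrite /x' spin_upd (negPf ji) jR.
  - by rewrite inE iR yi eqxx.
  - by rewrite inE flip_y yi iR /=; apply/eqP; lra.
have [x'' p P] := IH x' cx'.
by exists x'' => //; exact: br_cons st p.
Qed.

Lemma phase_up (R : realFieldType) (V : finType) (W : V -> V -> R) h (Rn : {set V}) tau :
  (forall i, W i i = 0) -> sign_vector tau Rn -> unsigned_gauge W Rn tau ->
  forall n (x : profile V), Pdown W h Rn tau x -> (#|~: Upset Rn tau x| < n)%N ->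
  exists2 x', br_path W h x x' & Pdown W h Rn tau x' /\ Pup W h Rn tau x'.
Proof.
move=> Wd sv ug; elim=> [//|n IH] x Pd cx.
case: (classic (Pup W h Rn tau x)) => [P|].
  by exists x => //; exact: br_refl.
move=> nP; have [i ni] := not_all_ex_not _ _ nP.
have [iR ni'] := imply_to_and _ _ ni.
have [yi /negP] := imply_to_and _ _ ni'.
rewrite -ltNge => Gi.
set x' := upd x i (~~ x i).
have st : br_step W h x x'.
  apply: step_flip => //; rewrite (sF_gauge W h x sv iR) yi; lra.
have Pd' : Pdown W h Rn tau x'.
  move=> j jR yj; rewrite /x' (mono_flip h x sv ug iR jR) yi.
  have := ug j i jR iR; case: (eqVneq j i) => [eji|ji].
    rewrite eji; lra.
  move: yj; rewrite /x' spin_upd (negPf ji) => /(Pd j jR); lra.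
have cx' : (#|~: Upset Rn tau x'| < n)%N.
  suff lt : (#|~: Upset Rn tau x'| < #|~: Upset Rn tau x|)%N by apply: leq_trans lt _; rewrite -ltnS.
  apply: (@card_lt _ _ _ i).
  - move=> j; rewrite !inE; case: (eqVneq j i) => [->|ji].
      by rewrite yi iR /= => _; apply/eqP; lra.
    by rewrite /x' spin_upd (negPf ji).
  - by rewrite !inE iR yi /=; apply/negP => /eqP; lra.
  - by rewrite !inE flip_y yi iR opprK eqxx.
have [x'' p P] := IH x' Pd' cx'.
by exists x'' => //; exact: br_cons st p.
Qed.

Definition cons (R : realFieldType) (V : finType) (Rn : {set V}) (tau : V -> R)
  (x : profile V) (s : bool) : Prop :=
  forall i, i \in Rn -> tau i * spin R (x i) = spin R s.

Lemma consensus (R : realFieldType) (V : finType) (W : V -> V -> R) h (Rn : {set V}) tau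
   (x : profile V) :
  sign_vector tau Rn -> unsigned_gauge W Rn tau ->
  indecomposable W Rn (fun i => tau i * h i - wB W i (~: Rn))
                      (fun i => tau i * h i + wB W i (~: Rn)) ->
  Pdown W h Rn tau x -> Pup W h Rn tau x -> exists s, cons Rn tau x s.
Proof.
move=> sv ug [_ ind] Pd Pu.
set U := Upset Rn tau x.
have sUR : U \subset Rn by apply/subsetP => j; rewrite inE => /andP [].
case: (eqVneq U set0) => [U0|Un0].
  exists false => j jR /=; case: (yvals x sv jR) => // yj.
  have : j \in U by rewrite inE jR yj eqxx.
  by rewrite U0 inE.
case: (eqVneq (Rn :\: U) set0) => [RU0|RUn0].
  exists true => j jR /=; case: (yvals x sv jR) => // yj.
  have : j \in Rn :\: U by rewrite !inE jR yj andbT; apply/eqP; lra.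
  by rewrite RU0 inE.
have [i [[iU ineq]|[iRU ineq]]] := ind U sUR Un0 RUn0.
  have iR := subsetP sUR i iU.
  have [_ up] := G_bounds h x sv ug iR.
  have yi : tau i * spin R (x i) = 1 by move: iU; rewrite inE => /andP [_ /eqP].
  have := Pd i iR yi; rewrite -/U in up; lra.
move: (iRU); rewrite inE => /andP [niU iR].
have [lo _] := G_bounds h x sv ug iR.
have yi : tau i * spin R (x i) = -1.
  case: (yvals x sv iR) => // yi; by move: niU; rewrite inE iR yi eqxx.
have := Pu i iR yi; rewrite -/U in lo; lra.
Qed.

Lemma cons_pos (R : realFieldType) (V : finType) (W : V -> V -> R) h (Rn : {set V}) tau
   (x : profile V) s i :
  sign_vector tau Rn -> unsigned_gauge W Rn tau ->
  (forall i, i \in Rn -> wB W i Rn - `|h i| > wB W i (~: Rn)) ->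
  cons Rn tau x s -> i \in Rn -> 0 < spin R (x i) * Fi W h x i.
Proof.
move=> sv ug hs cx iR.
rewrite (sF_gauge W h x sv iR) (cx i iR).
have [lo up] := G_bounds h x sv ug iR.
have th : `|tau i * h i| <= `|h i| by rewrite normrM (tau_abs sv iR) mul1r.
move: th; rewrite ler_norml => /andP [th1 th2].
have w0 : wB W i set0 = 0 by rewrite /wB big_set0.
have := hs i iR.
move: cx lo up; case: s => cx.
  have eU : Upset Rn tau x = Rn.
    apply/setP => j; rewrite !inE; case jR: (j \in Rn) => //=.
    by rewrite (cx j jR) eqxx.
  rewrite eU setDv w0 /= => lo up; lra.
have eU : Upset Rn tau x = set0.
  apply/setP => j; rewrite !inE; case jR: (j \in Rn) => //=.
  by rewrite (cx j jR); apply/eqP => /=; lra.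
rewrite eU setD0 w0 /= => lo up; lra.
Qed.

Lemma cons_step (R : realFieldType) (V : finType) (W : V -> V -> R) h (Rn : {set V}) tau
   (x y : profile V) s :
  (forall i, W i i = 0) -> undirected_on W (~: Rn) ->
  sign_vector tau Rn -> unsigned_gauge W Rn tau ->
  (forall i, i \in Rn -> wB W i Rn - `|h i| > wB W i (~: Rn)) ->
  cons Rn tau x s -> br_step W h x y -> cons Rn tau y s /\ Phi W h Rn x <= Phi W h Rn y.
Proof.
move=> Wd sym sv ug hs cx st.
have [i [ey le0]] := step_inv Wd st.
have iS : i \in ~: Rn.
  rewrite in_setC; apply/negP => iR.
  have := cons_pos sv ug hs cx iR; lra.
split.
  move=> j jR; rewrite ey spin_upd.
  case: (eqVneq j i) => [eji|_]; last exact: cx.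
  by move: iS; rewrite -eji in_setC jR.
rewrite ey Phi_flip // spinN.
have -> : 2 * (- spin R (x i) - spin R (x i)) * Fi W h x i = - 4 * (spin R (x i) * Fi W h x i) by ring.
lra.
Qed.

Lemma cons_path (R : realFieldType) (V : finType) (W : V -> V -> R) h (Rn : {set V}) tau
   (x y : profile V) s :
  (forall i, W i i = 0) -> undirected_on W (~: Rn) ->
  sign_vector tau Rn -> unsigned_gauge W Rn tau ->
  (forall i, i \in Rn -> wB W i Rn - `|h i| > wB W i (~: Rn)) ->
  br_path W h x y -> cons Rn tau x s -> cons Rn tau y s /\ Phi W h Rn x <= Phi W h Rn y.
Proof.
move=> Wd sym sv ug hs; elim=> [z|a b c st _ IH] cz.
  by split => //; exact: lexx.
have [cb le1] := cons_step Wd sym sv ug hs cz st.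
have [cc le2] := IH cb; split => //; exact: le_trans le1 le2.
Qed.

Definition pb (P : Prop) : bool := if excluded_middle_informative P then true else false.

Lemma pbP (P : Prop) : pb P <-> P.
Proof. by rewrite /pb; case: excluded_middle_informative. Qed.

Lemma reach (R : realFieldType) (V : finType) (W : V -> V -> R) h (Rn : {set V}) tau s :
  (forall i, W i i = 0) -> undirected_on W (~: Rn) ->
  sign_vector tau Rn -> unsigned_gauge W Rn tau ->
  (forall i, i \in Rn -> wB W i Rn - `|h i| > wB W i (~: Rn)) ->
  forall n (x : profile V), cons Rn tau x s ->
  (#|[set z | (Phi W h Rn x < Phi W h Rn z)%R]| < n)%N ->
  exists2 y, y \in [set z | pb (forall y, br_path W h z y -> nash W h y)] & br_path W h x y.
Proof.
move=> Wd sym sv ug hs; elim=> [//|n IH] x cx cn.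
case: (classic (forall y, br_path W h x y -> nash W h y)) => [P|].
  by exists x; [rewrite inE; apply/pbP | exact: br_refl].
move=> nP; have [y ny] := not_all_ex_not _ _ nP.
have [pxy nny] := imply_to_and _ _ ny.
have [i lt0] := not_nash Wd nny.
have [cy le1] := cons_path Wd sym sv ug hs pxy cx.
have iS : i \in ~: Rn.
  rewrite in_setC; apply/negP => iR.
  have := cons_pos sv ug hs cy iR; lra.
set y' := upd y i (~~ y i).
have st : br_step W h y y' by apply: step_flip => //; exact: ltW.
have [cy' _] := cons_step Wd sym sv ug hs cy st.
have gt : Phi W h Rn y < Phi W h Rn y'.
  rewrite /y' Phi_flip // spinN.
  have -> : 2 * (- spin R (y i) - spin R (y i)) * Fi W h y i = - 4 * (spin R (y i) * Fi W h y i) by ring.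
  lra.
have cn' : (#|[set z | (Phi W h Rn y' < Phi W h Rn z)%R]| < n)%N.
  suff lt : (#|[set z | (Phi W h Rn y' < Phi W h Rn z)%R]| < #|[set z | (Phi W h Rn x < Phi W h Rn z)%R]|)%N.
    by apply: leq_trans lt _; rewrite -ltnS.
  apply: (@card_lt _ _ _ y').
  - by move=> z; rewrite !inE => lz; lra.
  - by rewrite inE; lra.
  - by rewrite inE ltxx.
have [z zX p] := IH y' cy' cn'.
exists z => //; apply: br_path_trans pxy (br_cons st p).
Qed.

Unset Implicit Arguments.
Unset Strict Implicit.

Theorem corollary4 (R : realFieldType) (V : finType)
  (W : V -> V -> R) (h : V -> R) (Rn : {set V}) (tau : V -> R) :
  (forall i, W i i = 0) ->
  Rn != set0 ->
  structurally_balanced W Rn ->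
  undirected_on W (~: Rn) ->
  sign_vector tau Rn ->
  unsigned_gauge W Rn tau ->
  indecomposable W Rn (fun i => tau i * h i - wB W i (~: Rn))
                      (fun i => tau i * h i + wB W i (~: Rn)) ->
  (forall i, i \in Rn -> wB W i Rn - `|h i| > wB W i (~: Rn)) ->
  exists Xs : {set profile V},
    (forall x, x \in Xs -> nash W h x) /\ globally_BR_stable W h Xs.
Proof.
move=> Wd _ _ sym sv ug ind hs.
exists [set z | pb (forall y, br_path W h z y -> nash W h y)]; split; [|split].
- move=> x; rewrite inE => /pbP P; apply: P; exact: br_refl.
- move=> x.
  have [x1 p1 Pd1] := @phase_down R V W h Rn tau Wd sv _ x (ltnSn _).
  have [x2 p2 [Pd2 Pu2]] := @phase_up R V W h Rn tau Wd sv ug _ x1 Pd1 (ltnSn _).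
  have [s cs] := consensus sv ug ind Pd2 Pu2.
  have [y yX p3] := @reach R V W h Rn tau s Wd sym sv ug hs _ x2 cs (ltnSn _).
  exists y => //; apply: br_path_trans p1 (br_path_trans p2 p3).
- move=> x y; rewrite !inE => /pbP P pxy; apply/pbP => z pyz; apply: P.
  exact: br_path_trans pxy pyz.
Qed.
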